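(* Let $f\colon[0,1]\to\mathbb R$ be real analytic. Then for every $\varepsilon>0$ there exists an integer $R\ge 0$ such that for all integers $r\ge R$, $m\ge 1$, $b\ge 1$ and every $B=(B_1,\dots,B_b)\in\mathrm{PTE}(m,b,r)$, the quantities $$c_j=\sum_{i\in B_j}\int_{(i-1)/m}^{i/m} f(x)\,dx,\qquad j=1,\dots,b,$$ satisfy $|c_i-c_j|<\varepsilon$ for all $i,j\in\{1,\dots,b\}$.
   Context: $[m]=\{1,\dots,m\}$. A partition of $[m]$ into $b$ blocks is an ordered list $(B_1,\dots,B_b)$ of pairwise disjoint (possibly empty) subsets with union $[m]$. It is $r$-regular if $\sum_{x\in B_1}x^k=\dots=\sum_{x\in B_b}x^k$ for all $k=0,1,\dots,r$. $\mathrm{PTE}(m,b,r)$ denotes the set of $r$-regular partitions of $[m]$ into $b$ blocks. *)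

(* Defs.v *)
From Stdlib Require Import Reals List Arith Lia ClassicalEpsilon.
Import ListNotations.
Open Scope R_scope.

Definition real_analytic_on01 (f : R -> R) : Prop :=
  forall x0, 0 <= x0 <= 1 ->
    exists (a : nat -> R) (rho : R), 0 < rho /\
      forall x, 0 <= x <= 1 -> Rabs (x - x0) < rho -> Pser a (x - x0) (f x).

(* The Riemann integral of f over [a,b] (its value whenever f is Riemann
   integrable there; independent of the integrability proof by RiemannInt_P5). *)
Definition RInt (f : R -> R) (a b : R) : R :=
  epsilon (inhabits 0) (fun v => exists pr : Riemann_integrable f a b, RiemannInt pr = v).

Definition power_sum (k : nat) (l : list nat) : nat :=
  fold_right (fun x acc => (x ^ k + acc)%nat) 0%nat l.

(* B_1, ..., B_b (indices 1..b) is a partition of [m] = {1..m} into b blocks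
   (blocks possibly empty; each block is a duplicate-free list). *)
Definition is_partition (m b : nat) (B : nat -> list nat) : Prop :=
  (forall j, (1 <= j <= b)%nat ->
     NoDup (B j) /\ forall x, In x (B j) -> (1 <= x <= m)%nat) /\
  (forall x, (1 <= x <= m)%nat ->
     exists! j, (1 <= j <= b)%nat /\ In x (B j)).

Definition PTE (m b r : nat) (B : nat -> list nat) : Prop :=
  is_partition m b B /\
  forall k, (k <= r)%nat -> forall i j, (1 <= i <= b)%nat -> (1 <= j <= b)%nat ->
    power_sum k (B i) = power_sum k (B j).

Definition block_integral (f : R -> R) (m : nat) (Bj : list nat) : R :=
  fold_right (fun i acc => RInt f ((INR i - 1) / INR m) (INR i / INR m) + acc) 0 Bj.

(* Main.v *)
Require Import Defs.
From Stdlib Require Import Reals List Arith Lia Lra ClassicalEpsilon.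
From Coquelicot Require Import Coquelicot.
Open Scope R_scope.

Definition lsum (g : R -> R) (L : list nat) : R :=
  fold_right (fun t acc => g (INR t) + acc) 0 L.

Definition Qp (r : nat) (g : R -> R) : Prop :=
  exists c : nat -> R, forall t, g t = sum_f_R0 (fun l => c l * t ^ l) r.

Lemma lsum_ext g h L : (forall t, g t = h t) -> lsum g L = lsum h L.
Proof. intro H; induction L; simpl; [reflexivity| rewrite H, IHL; reflexivity]. Qed.

Lemma sum_zero r : sum_f_R0 (fun _ => 0) r = 0.
Proof. rewrite sum_cte; ring. Qed.

Lemma lsum_poly c r L :
  lsum (fun t => sum_f_R0 (fun l => c l * t ^ l) r) L =
  sum_f_R0 (fun l => c l * INR (power_sum l L)) r.
Proof.
  induction L as [|x L IH]; simpl.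
  - symmetry; transitivity (sum_f_R0 (fun _ => 0) r); [apply sum_eq; intros; simpl; ring | apply sum_zero].
  - rewrite IH, <- sum_plus. apply sum_eq; intros i _.
    rewrite plus_INR, pow_INR; ring.
Qed.

Lemma Q_block r g B1 B2 : Qp r g ->
  (forall k, (k <= r)%nat -> power_sum k B1 = power_sum k B2) ->
  lsum g B1 = lsum g B2.
Proof.
  intros [c Hc] H.
  rewrite (lsum_ext _ _ B1 Hc), (lsum_ext _ _ B2 Hc), !lsum_poly.
  apply sum_eq; intros i Hi; rewrite H; auto.
Qed.

Lemma Q_ext r g h : Qp r g -> (forall t, g t = h t) -> Qp r h.
Proof. intros [c Hc] H; exists c; intro t; rewrite <- H; auto. Qed.

Lemma Q_mono r g : Qp r g -> Qp (S r) g.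
Proof.
  intros [c Hc]. exists (fun l => if Nat.leb l r then c l else 0).
  intro t; rewrite tech5, Hc.
  replace (Nat.leb (S r) r) with false by (symmetry; apply Nat.leb_gt; lia).
  rewrite Rmult_0_l, Rplus_0_r. apply sum_eq; intros i Hi.
  replace (Nat.leb i r) with true by (symmetry; apply Nat.leb_le; lia). reflexivity.
Qed.

Lemma Q_mono_le r s g : (r <= s)%nat -> Qp r g -> Qp s g.
Proof. induction 1; auto using Q_mono. Qed.

Lemma Q_const a : Qp 0 (fun _ => a).
Proof. exists (fun _ => a); intro t; simpl; ring. Qed.

Lemma Q_add r g h : Qp r g -> Qp r h -> Qp r (fun t => g t + h t).
Proof.
  intros [c Hc] [d Hd]; exists (fun l => c l + d l); intro t.
  rewrite Hc, Hd, <- sum_plus; apply sum_eq; intros; ring.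
Qed.

Lemma Q_scal r a g : Qp r g -> Qp r (fun t => a * g t).
Proof.
  intros [c Hc]; exists (fun l => a * c l); intro t.
  rewrite Hc, scal_sum; apply sum_eq; intros; ring.
Qed.

Lemma Q_mulx r g : Qp r g -> Qp (S r) (fun t => t * g t).
Proof.
  intros [c Hc]; exists (fun l => match l with O => 0 | S l => c l end); intro t.
  rewrite decomp_sum by lia; simpl pred. rewrite Hc, scal_sum.
  rewrite Rmult_0_l, Rplus_0_l. apply sum_eq; intros; simpl; ring.
Qed.

Lemma Q_sum r n (G : nat -> R -> R) : (forall l, (l <= n)%nat -> Qp r (G l)) ->
  Qp r (fun t => sum_f_R0 (fun l => G l t) n).
Proof.
  induction n; intro H; simpl.
  - apply (H 0%nat); lia.
  - apply Q_add; [apply IHn; intros; apply H; lia | apply H; lia].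
Qed.

Lemma Q_shiftpow k : Qp k (fun t => (t - 1) ^ k).
Proof.
  induction k; simpl.
  - apply Q_const.
  - eapply Q_ext.
    + apply Q_add; [apply (Q_mulx _ _ IHk) | apply Q_mono, (Q_scal _ (-1) _ IHk)].
    + intro t; simpl; ring.
Qed.

Lemma Q_pow k : Qp k (fun t => t ^ k).
Proof.
  induction k; simpl; [apply Q_const| apply (Q_mulx _ _ IHk)].
Qed.

Lemma Q_diff l : Qp l (fun t => t ^ S l - (t - 1) ^ S l).
Proof.
  induction l.
  - eapply Q_ext; [apply (Q_const 1)| intro; simpl; ring].
  - eapply Q_ext.
    + apply Q_add; [apply (Q_mulx _ _ IHl)| apply Q_shiftpow].
    + intro t; simpl; ring.
Qed.

Lemma is_RInt_poly d n a b :
  is_RInt (fun x => sum_f_R0 (fun l => d l * x ^ l) n) a b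
    (sum_f_R0 (fun l => d l * (b ^ S l / INR (S l) - a ^ S l / INR (S l))) n).
Proof.
  induction n; simpl sum_f_R0.
  - exact (is_RInt_scal _ a b (d 0%nat) _ (is_RInt_pow a b 0)).
  - exact (is_RInt_plus _ _ a b _ _ IHn (is_RInt_scal _ a b (d (S n)) _ (is_RInt_pow a b (S n)))).
Qed.

Lemma Q_int d n M : M <> 0 ->
  Qp n (fun t => sum_f_R0 (fun l => d l * ((t / M) ^ S l / INR (S l) - ((t - 1) / M) ^ S l / INR (S l))) n).
Proof.
  intro HM. apply Q_sum; intros l Hl.
  eapply Q_ext.
  - apply (Q_mono_le l n _ Hl), (Q_scal _ (d l / INR (S l) * (/ M) ^ S l) _ (Q_diff l)).
  - intro t. unfold Rdiv. rewrite !Rpow_mult_distr. ring.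
Qed.

Fixpoint bern (n k : nat) (x : R) : R :=
  match n with
  | O => match k with O => 1 | S _ => 0 end
  | S n' => match k with
            | O => (1 - x) * bern n' O x
            | S k' => (1 - x) * bern n' k x + x * bern n' k' x
            end
  end.

Lemma bern_big n k x : (n < k)%nat -> bern n k x = 0.
Proof.
  revert k; induction n; intros k Hk; destruct k; simpl; try lia; try reflexivity.
  rewrite !IHn by lia. ring.
Qed.

Lemma bern_pos n k x : 0 <= x <= 1 -> 0 <= bern n k x.
Proof.
  intro Hx; revert k; induction n; intro k; destruct k; simpl; try lra.
  - specialize (IHn 0%nat); nra.
  - pose proof (IHn (S k)); pose proof (IHn k). nra.
Qed.

Lemma Q_bern n k : Qp n (bern n k).
Proof.
  revert k; induction n; intro k.
  - destruct k; [apply (Q_const 1)| apply (Q_const 0)].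
  - destruct k; simpl.
    + eapply Q_ext.
      * apply Q_add; [apply Q_mono, (IHn 0%nat) | apply Q_mulx, (Q_scal _ (-1)), (IHn 0%nat)].
      * intro; simpl; ring.
    + eapply Q_ext.
      * apply Q_add; [apply Q_add; [apply Q_mono, (IHn (S k)) | apply Q_mulx, (Q_scal _ (-1)), (IHn (S k))]
                     | apply Q_mulx, (IHn k)].
      * intro; simpl; ring.
Qed.

Definition T (n : nat) (g : nat -> R) (x : R) := sum_f_R0 (fun k => g k * bern n k x) n.

Lemma T_S n g x : T (S n) g x = (1 - x) * T n g x + x * T n (fun k => g (S k)) x.
Proof.
  unfold T. rewrite decomp_sum by lia. simpl pred. simpl bern.
  transitivity ((1 - x) * sum_f_R0 (fun k => g k * bern n k x) (S n)
               + x * sum_f_R0 (fun k => g (S k) * bern n k x) n).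
  - rewrite (decomp_sum (fun k => g k * bern n k x) (S n)) by lia. simpl pred.
    rewrite Rmult_plus_distr_l, !scal_sum, Rplus_assoc, <- sum_plus.
    f_equal; [ring|]. apply sum_eq; intros; ring.
  - rewrite tech5, bern_big by lia. ring.
Qed.

Lemma T_ext n g h x : (forall k, g k = h k) -> T n g x = T n h x.
Proof. intro H; unfold T; apply sum_eq; intros; rewrite H; auto. Qed.

Lemma T_lin n a b c g1 g2 g3 x :
  T n (fun k => a * g1 k + b * g2 k + c * g3 k) x = a * T n g1 x + b * T n g2 x + c * T n g3 x.
Proof.
  unfold T. rewrite !scal_sum, <- !sum_plus. apply sum_eq; intros; ring.
Qed.

Lemma T_1 n x : T n (fun _ => 1) x = 1.
Proof. induction n; [unfold T; simpl; ring|]. rewrite T_S, IHn; ring. Qed.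

Lemma T_k n x : T n INR x = INR n * x.
Proof.
  induction n; [unfold T; simpl; ring|]. rewrite T_S, IHn.
  rewrite (T_ext _ _ (fun k => 1 * INR k + 1 * 1 + 0 * 1)) by (intro; rewrite S_INR; ring).
  rewrite T_lin, IHn, T_1, S_INR; ring.
Qed.

Lemma T_k2 n x : T n (fun k => INR k ^ 2) x = INR n * x * (1 - x) + (INR n * x) ^ 2.
Proof.
  induction n; [unfold T; simpl; ring|]. rewrite T_S, IHn.
  rewrite (T_ext _ _ (fun k => 1 * INR k ^ 2 + 2 * INR k + 1 * 1)) by (intro; rewrite S_INR; ring).
  rewrite T_lin, IHn, T_k, T_1, S_INR; ring.
Qed.

Lemma T_var n x : (0 < n)%nat ->
  T n (fun k => (INR k / INR n - x) ^ 2) x = x * (1 - x) / INR n.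
Proof.
  intro Hn. assert (HN : INR n <> 0) by (apply not_0_INR; lia).
  rewrite (T_ext _ _ (fun k => (/ INR n ^ 2) * INR k ^ 2 + (- 2 * x / INR n) * INR k + (x ^ 2) * 1))
    by (intro; field; auto).
  rewrite T_lin, T_k2, T_k, T_1. field; auto.
Qed.

Lemma T_abs n h x : 0 <= x <= 1 -> Rabs (T n h x) <= T n (fun k => Rabs (h k)) x.
Proof.
  intro Hx. unfold T. eapply Rle_trans; [apply sum_f_R0_triangle|].
  apply sum_Rle; intros k _. rewrite Rabs_mult, (Rabs_right (bern n k x)).
  - lra.
  - apply Rle_ge, bern_pos; auto.
Qed.

Lemma T_mono n h1 h2 x : 0 <= x <= 1 -> (forall k, (k <= n)%nat -> h1 k <= h2 k) ->
  T n h1 x <= T n h2 x.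
Proof.
  intros Hx H. unfold T. apply sum_Rle; intros k Hk.
  apply Rmult_le_compat_r; [apply bern_pos; auto| auto].
Qed.

Lemma bernstein (g : R -> R) :
  (forall x, 0 <= x <= 1 -> continuity_pt g x) ->
  forall eps, 0 < eps -> exists n, (0 < n)%nat /\
    forall x, 0 <= x <= 1 -> Rabs (g x - T n (fun k => g (INR k / INR n)) x) <= eps.
Proof.
  intros Hc eps Heps.
  assert (He2 : 0 < eps / 2) by lra.
  destruct (Heine_cor2 (f:=g) (a:=0) (b:=1) Hc (mkposreal _ He2)) as [[d Hd] Hdel]; simpl in Hdel.
  destruct (continuity_ab_maj (fun x => Rabs (g x)) 0 1) as [Mx [HM HMx]]; [lra| |].
  { intros c Hc'. apply (continuity_pt_comp g Rabs); [auto| apply Rcontinuity_abs]. }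
  set (M := Rabs (g Mx)).
  assert (HM0 : 0 <= M) by apply Rabs_pos.
  set (q := / d ^ 2).
  assert (Hq : 0 < q) by (apply Rinv_0_lt_compat; apply pow_lt; lra).
  assert (Hqd : d ^ 2 * q = 1) by (unfold q; field; lra).
  set (K := 2 * M * q).
  assert (HK : 0 <= K) by (unfold K; nra).
  destruct (INR_unbounded (2 * K / eps)) as [n0 Hn0].
  exists (S n0); split; [lia|].
  set (n := S n0). assert (Hn : 0 < INR n) by (apply lt_0_INR; unfold n; lia).
  assert (HnK : K <= eps / 2 * INR n).
  { assert (INR n > 2 * K / eps) by (unfold n; rewrite S_INR; lra).
    apply Rmult_gt_compat_r with (r := eps) in H; [|lra].
    unfold Rdiv in H. rewrite Rmult_assoc, Rinv_l in H by lra. lra. }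
  intros x Hx.
  rewrite <- (Rmult_1_r (g x)), <- (T_1 n x).
  replace (g x * T n (fun _ => 1) x - T n (fun k => g (INR k / INR n)) x)
    with (T n (fun k => g x * 1 + (-1) * g (INR k / INR n) + 0 * 1) x)
    by (rewrite !T_lin; ring).
  eapply Rle_trans; [apply T_abs; auto|].
  eapply Rle_trans.
  - apply (T_mono n _ (fun k => eps / 2 * 1 + K * (INR k / INR n - x) ^ 2 + 0 * 1) x Hx).
    intros k Hk.
    set (y := INR k / INR n).
    assert (Hy : 0 <= y <= 1).
    { unfold y; split.
      - apply Rmult_le_pos; [apply pos_INR| left; apply Rinv_0_lt_compat; auto].
      - apply Rmult_le_reg_r with (INR n); auto. unfold Rdiv.
        rewrite Rmult_assoc, Rinv_l by lra. rewrite Rmult_1_l, Rmult_1_r. apply le_INR; auto. }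
    assert (Hgx : Rabs (g x) <= M) by (apply HM; auto).
    assert (Hgy : Rabs (g y) <= M) by (apply HM; auto).
    assert (Htri : Rabs (g x * 1 + -1 * g y + 0 * 1) <= Rabs (g x) + Rabs (g y)).
    { replace (g x * 1 + -1 * g y + 0 * 1) with (g x + - g y) by ring.
      eapply Rle_trans; [apply Rabs_triang| rewrite Rabs_Ropp; lra]. }
    assert (Hsq : 0 <= (y - x) ^ 2) by (apply pow2_ge_0).
    destruct (Rlt_dec (Rabs (x - y)) d) as [Hlt|Hge].
    + assert (Rabs (g x - g y) < eps / 2) by (apply Hdel; auto).
      replace (g x * 1 + -1 * g y + 0 * 1) with (g x - g y) by ring.
      assert (0 <= K * (y - x) ^ 2) by (apply Rmult_le_pos; auto). lra.
    + assert (Hd2 : d ^ 2 <= (y - x) ^ 2).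
      { rewrite <- (pow2_abs (y - x)). rewrite Rabs_minus_sym.
        apply pow_incr; lra. }
      assert (2 * M <= K * (y - x) ^ 2).
      { unfold K. apply Rle_trans with (2 * M * q * d ^ 2).
        - right. transitivity (2 * M * (d ^ 2 * q)); [rewrite Hqd; ring | ring].
        - apply Rmult_le_compat_l; [nra| auto]. }
      lra.
  - rewrite T_lin, T_1, T_var by (unfold n; lia).
    assert (Hx1 : 0 <= x * (1 - x) <= 1) by nra.
    assert (K * (x * (1 - x) / INR n) <= eps / 2).
    { apply Rmult_le_reg_r with (INR n); auto. unfold Rdiv.
      replace (K * (x * (1 - x) * / INR n) * INR n) with (K * (x * (1 - x))) by (field; lra).
      nra. }
    lra.
Qed.

Definition cl (x : R) : R := Rmax 0 (Rmin 1 x).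

Lemma cl_lip x y : Rabs (cl x - cl y) <= Rabs (x - y).
Proof.
  unfold cl, Rmax, Rmin; repeat destruct Rle_dec; unfold Rabs;
  repeat destruct Rcase_abs; lra.
Qed.

Lemma cl_id x : 0 <= x <= 1 -> cl x = x.
Proof. unfold cl, Rmax, Rmin; intros; repeat destruct Rle_dec; lra. Qed.

Lemma cl_range x : 0 <= cl x <= 1.
Proof. unfold cl, Rmax, Rmin; repeat destruct Rle_dec; lra. Qed.

Lemma lip_cont h x : (forall x y, Rabs (h x - h y) <= Rabs (x - y)) -> continuity_pt h x.
Proof.
  intros H eps Heps. exists eps; split; [lra|].
  intros y [_ Hy]. simpl in *. unfold R_dist in *.
  eapply Rle_lt_trans; [apply H| auto].
Qed.

Lemma analytic_cont f : real_analytic_on01 f ->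
  forall x0, 0 <= x0 <= 1 -> continuity_pt (fun x => f (cl x)) x0.
Proof.
  intros Hf x0 Hx0.
  destruct (Hf x0 Hx0) as [a [rho [Hr Ha]]].
  set (s := Rmin rho (1/2) / 2).
  assert (Hs : 0 < s /\ s < rho /\ s <= 1/4).
  { unfold s, Rmin; destruct Rle_dec; lra. }
  set (y0 := if Rle_dec x0 (1/2) then x0 + s else x0 - s).
  assert (Hy0 : 0 <= y0 <= 1 /\ Rabs (y0 - x0) = s).
  { unfold y0; destruct Rle_dec; split; try lra.
    - replace (x0 + s - x0) with s by ring. apply Rabs_right; lra.
    - replace (x0 - s - x0) with (- s) by ring. rewrite Rabs_Ropp. apply Rabs_right; lra. }
  destruct Hy0 as [Hy0 Hz].
  assert (Hser : Pser a (y0 - x0) (f y0)) by (apply Ha; lra).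
  apply is_pseries_Reals in Hser.
  assert (Hrad : Rbar_le s (CV_radius a)).
  { rewrite <- Hz. destruct (Rbar_le_dec (Rabs (y0 - x0)) (CV_radius a)) as [H|H]; auto.
    exfalso. apply Rbar_not_le_lt in H. apply (CV_disk_outside a (y0 - x0) H).
    eapply is_lim_seq_ext; [| apply ex_series_lim_0; exists (f y0); exact Hser].
    intro n; simpl. rewrite pow_n_pow. change (scal ((y0 - x0) ^ n) (a n)) with ((y0 - x0) ^ n * a n).
    ring. }
  assert (Hcont0 : continuity_pt (PSeries a) 0).
  { apply PSeries_continuity. rewrite Rabs_R0.
    eapply Rbar_lt_le_trans; [| exact Hrad]. simpl; lra. }
  set (h := fun x => PSeries a (cl x - x0)).
  assert (Hh : continuity_pt h x0).
  { apply (continuity_pt_comp (fun x => cl x - x0) (PSeries a)).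
    - apply lip_cont. intros u v. replace (cl u - x0 - (cl v - x0)) with (cl u - cl v) by ring.
      apply cl_lip.
    - rewrite cl_id by auto. replace (x0 - x0) with 0 by ring. auto. }
  assert (Heq : forall y, Rabs (y - x0) < rho -> h y = f (cl y)).
  { intros y Hy. unfold h. apply is_pseries_unique, is_pseries_Reals, Ha.
    - apply cl_range.
    - replace (cl y - x0) with (cl y - cl x0) by (rewrite (cl_id x0 Hx0); ring). eapply Rle_lt_trans; [apply cl_lip| auto]. }
  apply continuity_pt_filterlim. apply continuity_pt_filterlim in Hh.
  rewrite <- Heq by (replace (x0 - x0) with 0 by ring; rewrite Rabs_R0; auto).
  eapply filterlim_ext_loc; [| exact Hh].
  exists (mkposreal rho Hr). intros y Hy. apply Heq. exact Hy.
Qed.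

Lemma lsum_plus g h L : lsum (fun s => g s + h s) L = lsum g L + lsum h L.
Proof. induction L; simpl; [ring| rewrite IHL; ring]. Qed.

Lemma lsum_bound g L c : (forall t, In t L -> Rabs (g (INR t)) <= c) ->
  Rabs (lsum g L) <= INR (length L) * c.
Proof.
  induction L as [|x L IH]; intro H; unfold lsum; cbn [fold_right length]; fold (lsum g).
  - rewrite Rabs_R0; simpl; lra.
  - rewrite S_INR. eapply Rle_trans; [apply Rabs_triang|].
    assert (Rabs (g (INR x)) <= c) by (apply H; left; auto).
    assert (Rabs (lsum g L) <= INR (length L) * c) by (apply IH; intros; apply H; right; auto).
    unfold lsum in H1. lra.
Qed.

Lemma DR_eq f g a b : (forall x, 0 <= x <= 1 -> f x = g x) ->
  (forall x, 0 <= x <= 1 -> continuity_pt g x) -> 0 <= a <= b -> b <= 1 ->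
  Defs.RInt f a b = RInt g a b /\ ex_RInt g a b.
Proof.
  intros Hfg Hc Hab Hb1.
  assert (Hg : ex_RInt g a b).
  { apply (ex_RInt_continuous (V := R_CompleteNormedModule)). intros z Hz. rewrite Rmin_left, Rmax_right in Hz by lra.
    apply continuity_pt_filterlim, Hc; lra. }
  split; auto.
  assert (Hf : ex_RInt f a b).
  { apply ex_RInt_ext with g; auto. intros x Hx. rewrite Rmin_left, Rmax_right in Hx by lra.
    symmetry; apply Hfg; lra. }
  destruct (epsilon_spec (inhabits 0) (fun v => exists pr : Riemann_integrable f a b, RiemannInt pr = v))
    as [pr Hpr].
  { exists (RiemannInt (ex_RInt_Reals_0 _ _ _ Hf)). eexists; reflexivity. }
  unfold Defs.RInt. rewrite <- Hpr, <- RInt_Reals.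
  apply RInt_ext. intros x Hx. rewrite Rmin_left, Rmax_right in Hx by lra. apply Hfg; lra.
Qed.

Theorem mainTheorem16 (f : R -> R) (Hf : real_analytic_on01 f) :
  forall eps : R, 0 < eps ->
  exists R0 : nat, forall (r m b : nat), (R0 <= r)%nat -> (1 <= m)%nat -> (1 <= b)%nat ->
    forall B : nat -> list nat, PTE m b r B ->
    forall i j, (1 <= i <= b)%nat -> (1 <= j <= b)%nat ->
      Rabs (block_integral f m (B i) - block_integral f m (B j)) < eps.
Proof.
  intros eps Heps.
  set (g := fun x => f (cl x)).
  assert (Hgc : forall x, 0 <= x <= 1 -> continuity_pt g x) by (apply analytic_cont; auto).
  assert (Hfg : forall x, 0 <= x <= 1 -> f x = g x) by (intros; unfold g; rewrite cl_id; auto).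
  assert (He3 : 0 < eps / 3) by lra.
  destruct (bernstein g Hgc (eps / 3) He3) as [n [Hn Hbern]].
  set (p := fun x => T n (fun k => g (INR k / INR n)) x).
  assert (Hp : Qp n p).
  { unfold p, T. apply Q_sum. intros l _. apply Q_scal, Q_bern. }
  destruct Hp as [d Hd].
  exists n. intros r m b Hr Hm Hb1 B [[Hpart Hcov] Hpow] i j Hi Hj.
  set (M := INR m).
  assert (HM : 0 < M) by (apply lt_0_INR; lia).
  set (Phi := fun s => sum_f_R0 (fun l => d l * ((s / M) ^ S l / INR (S l) - ((s - 1) / M) ^ S l / INR (S l))) n).
  set (Er := fun s => Defs.RInt f ((s - 1) / M) (s / M) - Phi s).
  assert (Hblock : forall L, block_integral f m L = lsum Phi L + lsum Er L).
  { intro L. rewrite <- lsum_plus. unfold block_integral, lsum, Er.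
    induction L; simpl; [reflexivity|]. rewrite IHL. unfold M; ring. }
  assert (HPhi : Qp r Phi) by (apply (Q_mono_le n r); auto; apply Q_int; lra).
  assert (HEr : forall t, (1 <= t <= m)%nat -> Rabs (Er (INR t)) <= eps / 3 / M).
  { intros t Ht.
    assert (Ht1 : 1 <= INR t) by (apply (le_INR 1); lia).
    assert (HtM : INR t <= M) by (apply le_INR; lia).
    set (a0 := (INR t - 1) / M). set (b0 := INR t / M).
    assert (Ha0 : 0 <= a0) by (unfold a0; apply Rmult_le_pos; [lra| left; apply Rinv_0_lt_compat; auto]).
    assert (Hab : a0 <= b0) by (unfold a0, b0, Rdiv; apply Rmult_le_compat_r; [left; apply Rinv_0_lt_compat; auto| lra]).
    assert (Hb0 : b0 <= 1).
    { unfold b0. apply Rmult_le_reg_r with M; auto. unfold Rdiv.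
      rewrite Rmult_assoc, Rinv_l by lra. lra. }
    assert (Hba : b0 - a0 = / M) by (unfold a0, b0; field; lra).
    destruct (DR_eq f g a0 b0 Hfg Hgc (conj Ha0 Hab) Hb0) as [Heq Hex].
    assert (Hip : is_RInt p a0 b0 (Phi (INR t))).
    { eapply is_RInt_ext; [| apply is_RInt_poly]. intros x _. symmetry; apply Hd. }
    unfold Er. fold a0 b0. rewrite Heq, <- (is_RInt_unique _ _ _ _ Hip).
    assert (Hexp : ex_RInt p a0 b0) by (eexists; exact Hip).
    change (Rabs (minus (RInt g a0 b0) (RInt p a0 b0)) <= eps / 3 / M). rewrite <- (RInt_minus g p a0 b0 Hex Hexp).
    replace (eps / 3 / M) with ((b0 - a0) * (eps / 3)) by (rewrite Hba; field; lra).
    apply abs_RInt_le_const; auto.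
    - apply (ex_RInt_minus g p a0 b0 Hex Hexp).
    - intros x Hx. change (Rabs (g x - p x) <= eps / 3). apply Hbern. lra. }
  assert (Hlen : forall k, (1 <= k <= b)%nat -> Rabs (lsum Er (B k)) <= eps / 3).
  { intros k Hk. destruct (Hpart k Hk) as [Hnd Hin].
    eapply Rle_trans.
    - apply lsum_bound with (c := eps / 3 / M). intros t Ht. apply HEr, Hin; auto.
    - assert (Hl : (length (B k) <= m)%nat).
      { apply Nat.le_trans with (length (seq 1 m)); [| rewrite length_seq; lia].
        apply NoDup_incl_length; auto. intros t Ht. apply in_seq. specialize (Hin t Ht). lia. }
      apply le_INR in Hl. fold M in Hl.
      apply Rle_trans with (M * (eps / 3 / M)).
      + apply Rmult_le_compat_r; [| auto]. apply Rlt_le, Rdiv_lt_0_compat; lra.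
      + right. field. lra. }
  rewrite !Hblock.
  rewrite (Q_block r Phi (B i) (B j) HPhi) by (intros k Hk; apply Hpow; auto; lia).
  replace (lsum Phi (B j) + lsum Er (B i) - (lsum Phi (B j) + lsum Er (B j)))
    with (lsum Er (B i) + - lsum Er (B j)) by ring.
  eapply Rle_lt_trans; [apply Rabs_triang|]. rewrite Rabs_Ropp.
  pose proof (Hlen i Hi); pose proof (Hlen j Hj). lra.
Qed.
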